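(* Let $H:\mathbb{C}^{n_1\times\dots\times n_d}\to\mathbb{C}^{n_1\times\dots\times n_d}$ be linear and self-adjoint ($\langle H[Y],Z\rangle=\langle Y,H[Z]\rangle$ for all $Y,Z$), and let $\mathrm{E}(Y)=\langle Y,H[Y]\rangle$. Run the rank-augmenting TTN integrator (described in the context) on the maximal tree $\bar\tau$ with an orthonormal starting TTN $Y_{\bar\tau}^0$ of full tree rank and the function $F(t,Y)=-\mathrm{i}\,H[Y]$ (the tensor Schrödinger equation $\mathrm{i}\dot A=H[A]$), over a step $t_0<t_1$ of arbitrary step size $h=t_1-t_0$. Then the rank-augmented result $\widehat Y_{\bar\tau}^1$ satisfies $\mathrm{E}(\widehat Y_{\bar\tau}^1)=\mathrm{E}(Y_{\bar\tau}^0)$.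
   Context: Tensor notation: for a tensor with modes indexed $0,1,\dots,m$, $\mathrm{mat}_i$ is the mode-$i$ matricization (rows indexed by the $i$th index) and $\mathrm{ten}_i$ its inverse; $A\times_i\mathbf{B}$ is the mode-$i$ product, $\mathrm{mat}_i(A\times_i\mathbf{B})=\mathbf{B}\,\mathrm{mat}_i(A)$; $\times_{i=1}^m$ denotes successive products in modes $1,\dots,m$; ${}^*$ is conjugate transpose; $\|\cdot\|$ and $\langle X,Y\rangle=\sum \overline{x}\,y$ are the Euclidean norm and inner product of the vectors of entries. Trees: given a finite leaf set $\mathcal{L}=\{1,\dots,d\}$, each leaf $l$ is a tree with leaf set $\{l\}$; if $\tau_1,\dots,\tau_m$ ($m\ge2$) are trees with pairwise disjoint leaf sets, the ordered tuple $\tau=(\tau_1,\dots,\tau_m)$ is a tree whose leaf set is their union; the $\tau_i$ are its direct subtrees, and subtrees are defined recursively ($\sigma\le\tau$, $\sigma<\tau$ if also $\sigma\ne\tau$). Fix a tree $\bar\tau$ with leaf set $\mathcal{L}$. Tree tensor networks (TTN): given dimensions $n_l$ and ranks $r_\sigma$ ($\sigma\le\bar\tau$, $r_{\bar\tau}=1$), basis matrices $\mathbf{U}_l\in\mathbb{C}^{n_l\times r_l}$ at leaves and connection tensors $C_\tau\in\mathbb{C}^{r_\tau\times r_{\tau_1}\times\dots\times r_{\tau_m}}$ of full multilinear rank at non-leaf subtrees $\tau=(\tau_1,\dots,\tau_m)$, set $X_l=\mathbf{U}_l^\top$, $X_\tau=C_\tau\times_0\mathbf{I}_{r_\tau}\times_{i=1}^m\mathbf{U}_{\tau_i}\in\mathcal{V}_\tau:=\mathbb{C}^{r_\tau\times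 n_{\tau_1}\times\dots\times n_{\tau_m}}$ with $n_\tau=\prod_i n_{\tau_i}$, and $\mathbf{U}_\tau=\mathrm{mat}_0(X_\tau)^\top\in\mathbb{C}^{n_\tau\times r_\tau}$; for a leaf, $\mathcal{V}_l:=\mathbb{C}^{r_l\times n_l}$. The TTN is orthonormal if every $\mathbf{U}_\sigma$, $\sigma<\bar\tau$, has orthonormal columns. Full tree rank means all connection tensors have full multilinear rank. $\mathcal{V}_{\bar\tau}$ is identified with $\mathbb{C}^{n_1\times\dots\times n_d}$. Reduced operators and starting values: for a non-leaf $\tau=(\tau_1,\dots,\tau_m)$, a function $F_\tau:[t_0,t_1]\times\mathcal{V}_\tau\to\mathcal{V}_\tau$ and a starting TTN $Y_\tau^0=C_\tau^0\times_0\mathbf{I}_{r_\tau}\times_{i=1}^m\mathbf{U}_{\tau_i}^0$ with $\mathbf{U}_{\tau_i}^0=\mathrm{mat}_0(X_{\tau_i}^0)^\top$, compute QR decompositions $\mathrm{mat}_i(C_\tau^0)^\top=\mathbf{Q}_{\tau_i}^0\mathbf{S}_{\tau_i}^{0,\top}$, let $\mathbf{V}_{\tau_i}^0=\mathrm{mat}_i\big(\mathrm{ten}_i(\mathbf{Q}_{\tau_i}^{0,\top})\times_0\mathbf{I}_{r_\tau}\times_{j\ne i}\mathbf{U}_{\tau_j}^0\big)^\top$, prolongation $\pi_{\tau,i}(Y)=\mathrm{ten}_i\big((\mathbf{V}_{\tau_i}^0\mathrm{mat}_0(Y))^\top\big)$ for $Y\in\mathcal{V}_{\tau_i}$, restriction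 $\pi_{\tau,i}^\dagger(Z)=\mathrm{ten}_0\big((\mathrm{mat}_i(Z)\mathbf{V}_{\tau_i}^0)^\top\big)$ for $Z\in\mathcal{V}_\tau$, and set $F_{\tau_i}(t,Y)=\pi_{\tau,i}^\dagger(F_\tau(t,\pi_{\tau,i}(Y)))$ and $Y_{\tau_i}^0=X_{\tau_i}^0\times_0\mathbf{S}_{\tau_i}^{0,\top}$. Rank-augmenting TTN integrator on $(\tau,Y_\tau^0,F_\tau,t_0,t_1)$, $\tau$ non-leaf: (1) for each $i$: if $\tau_i=l$ is a leaf, solve $\dot Y_l=F_l(t,Y_l)$, $Y_l(t_0)=Y_l^0$, let $\widehat{\mathbf{U}}_l$ have orthonormal columns spanning the range of $(Y_l(t_1)^\top,\mathbf{U}_l^0)$, and $\widehat{\mathbf{M}}_l=\widehat{\mathbf{U}}_l^*\mathbf{U}_l^0$; otherwise call the integrator recursively on $(\tau_i,Y_{\tau_i}^0,F_{\tau_i},t_0,t_1)$, obtaining $\widehat Y_{\tau_i}^1$ (with root connection tensor $\widehat C_{\tau_i}^1$) and $\widehat C_{\tau_i}^0$, let $\widehat{\mathbf{Q}}_{\tau_i}$ have orthonormal columns spanning the range of $(\mathrm{mat}_0(\widehat C_{\tau_i}^1)^\top,\mathrm{mat}_0(\widehat C_{\tau_i}^0)^\top)$, let $\widehat X_{\tau_i}$ be $\widehat Y_{\tau_i}^1$ with root connection tensor replaced by $\mathrm{ten}_0(\widehat{\mathbf{Q}}_{\tau_i}^\top)$, and set $\widehat{\mathbf{U}}_{\tau_i}=\mathrm{mat}_0(\widehat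 X_{\tau_i})^\top$, $\widehat{\mathbf{M}}_{\tau_i}=\widehat{\mathbf{U}}_{\tau_i}^*\mathbf{U}_{\tau_i}^0$. (2) Set $\widehat C_\tau^0=C_\tau^0\times_{i=1}^m\widehat{\mathbf{M}}_{\tau_i}$, solve $\dot{\widehat C}_\tau(t)=F_\tau\big(t,\widehat C_\tau(t)\times_0\mathbf{I}_{r_\tau}\times_{i=1}^m\widehat{\mathbf{U}}_{\tau_i}\big)\times_{i=1}^m\widehat{\mathbf{U}}_{\tau_i}^*$, $\widehat C_\tau(t_0)=\widehat C_\tau^0$, set $\widehat C_\tau^1=\widehat C_\tau(t_1)$, and return $\widehat Y_\tau^1=\widehat C_\tau^1\times_0\mathbf{I}_{r_\tau}\times_{i=1}^m\widehat{\mathbf{U}}_{\tau_i}$ and $\widehat C_\tau^0$. At the top level, $F_{\bar\tau}=F$ and $Y_{\bar\tau}^0$ is the given starting TTN. All differential equations are assumed to be solved exactly. *)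

(* Defs.v *)
From HB Require Import structures.
From mathcomp Require Import all_boot all_order all_algebra.
From mathcomp Require Import complex.
From mathcomp Require Import all_classical all_reals topology normedtype derive.
Unset Printing Implicit Defensive.
Import Order.TTheory GRing.Theory Num.Theory.
Import numFieldNormedType.Exports.
Local Open Scope classical_set_scope.
Local Open Scope ring_scope.

Inductive tree : Type := Leaf of nat | Node of seq tree.
Definition tdef := Leaf 0.

Fixpoint leaves (t : tree) : seq nat :=
  match t with Leaf l => [:: l] | Node ts => flatten (map leaves ts) end.

Fixpoint arity_ok (t : tree) : bool :=
  match t with Leaf _ => true | Node ts => (1 < size ts)%N && all arity_ok ts end.

(* t is a tree (in the sense of the paper) with leaf set {1,...,d}:
   pairwise disjoint leaf sets of the direct subtrees (leaves uniq),
   and the leaf set is exactly {1,...,d}. *)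
Definition is_tree_on (d : nat) (t : tree) : Prop :=
  arity_ok t /\ uniq (leaves t) /\ perm_eq (leaves t) (iota 1 d).

Fixpoint dropS (ts : seq tree) (i : nat) : seq tree :=
  match ts with
  | [::] => [::]
  | t :: ts' => match i with 0%N => ts' | i'.+1 => t :: dropS ts' i' end
  end.

Section TTNdefs.
Variable R : realType.
Local Notation C := (complex R).
Variable n : nat -> nat.

Fixpoint PL (f : tree -> finType) (ts : seq tree) : finType :=
  match ts with [::] => unit | t :: ts' => (f t * PL f ts')%type end.

(* index set of subtree t : {1..n_t}, realised as the product of the
   index sets of its direct subtrees (n_tau = prod_i n_{tau_i}) *)
Fixpoint Idx (t : tree) : finType :=
  match t with Leaf l => 'I_(n l) | Node ts => PL Idx ts end.

Fixpoint HL (T : tree -> Type) (ts : seq tree) : Type :=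
  match ts with [::] => unit | t :: ts' => (T t * HL T ts')%type end.

Definition ordT (rk : tree -> nat) (t : tree) : finType := 'I_(rk t).

(* V_t = C^{r_t x n_{t_1} x ... x n_{t_m}}, stored in its mode-0 matricised
   form (rows: mode 0; columns: the product index set Idx t).  For a leaf,
   V_l = C^{r_l x n_l}. *)
Definition V (rk : tree -> nat) (t : tree) : Type := 'I_(rk t) -> Idx t -> C.

(* A TTN on the tree t with root rank r0 and ranks rk on proper subtrees:
   leaf:      the basis matrix U_l in C^{n_l x r0};
   non-leaf:  the connection tensor C_t in C^{r0 x r_{t_1} x ... x r_{t_m}}
              together with TTNs for the direct subtrees t_i (root rank r_{t_i}). *)
Fixpoint TTN (rk : tree -> nat) (r0 : nat) (t : tree) : Type :=
  match t with
  | Leaf l => 'I_(n l) -> 'I_r0 -> C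
  | Node ts => (('I_r0 -> PL (ordT rk) ts -> C) * HL (fun s => TTN rk (rk s) s) ts)%type
  end.

Definition ConnT (rk : tree -> nat) (r0 : nat) (t : tree) : Type :=
  match t with Leaf _ => unit | Node ts => 'I_r0 -> PL (ordT rk) ts -> C end.

(* multi-mode product  G x_1 M_1 ... x_m M_m  evaluated at x:
   sum_y G(y) prod_i M_i(x_i, y_i) *)
Fixpoint mcS (f g : tree -> finType) (ts : seq tree) :
  (forall i, f (nth tdef ts i) -> g (nth tdef ts i) -> C) -> (PL g ts -> C) -> PL f ts -> C :=
  match ts as ts0 return
    (forall i, f (nth tdef ts0 i) -> g (nth tdef ts0 i) -> C) -> (PL g ts0 -> C) -> PL f ts0 -> C with
  | [::] => fun M G x => G tt
  | t :: ts' => fun M G x =>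
      \sum_(y : g t) M 0%N x.1 y * mcS f g ts' (fun i => M i.+1) (fun ys => G (y, ys)) x.2
  end.

Fixpoint UmH (T : tree -> Type) (g : tree -> finType) (fl : forall s, T s -> g s -> Idx s -> C)
  (ts : seq tree) : HL T ts -> forall i, Idx (nth tdef ts i) -> g (nth tdef ts i) -> C :=
  match ts as ts0 return HL T ts0 -> forall i, Idx (nth tdef ts0 i) -> g (nth tdef ts0 i) -> C with
  | [::] => fun _ _ _ _ => 0
  | t :: ts' => fun h i =>
      match i as i0 return Idx (nth tdef (t :: ts') i0) -> g (nth tdef (t :: ts') i0) -> C with
      | 0%N => fun j k => fl t h.1 k j
      | i'.+1 => UmH T g fl ts' h.2 i'
      end
  end.

(* X_t = C_t x_0 I x_1 U_{t_1} ... x_m U_{t_m}  (for a leaf X_l = U_l^T),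
   as an element of C^{r0 x n_t} (= mat_0 X_t; U_t = (full X)^T). *)
Fixpoint full (rk : tree -> nat) (r0 : nat) (t : tree) : TTN rk r0 t -> 'I_r0 -> Idx t -> C :=
  match t as t0 return TTN rk r0 t0 -> 'I_r0 -> Idx t0 -> C with
  | Leaf l => fun U a j => U j a
  | Node ts => fun X a js =>
      mcS Idx (ordT rk) ts
        (UmH (fun s => TTN rk (rk s) s) (ordT rk) (fun s => full rk (rk s) s) ts X.2) (X.1 a) js
  end.

Definition Umat (rk : tree -> nat) (r0 : nat) (t : tree) (X : TTN rk r0 t) : Idx t -> 'I_r0 -> C :=
  fun j a => full rk r0 t X a j.

Fixpoint getH (T : tree -> Type) (dflt : T tdef) (ts : seq tree) : HL T ts -> forall i, T (nth tdef ts i) :=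
  match ts as ts0 return HL T ts0 -> forall i, T (nth tdef ts0 i) with
  | [::] => fun _ i => match i as i0 return T (nth tdef [::] i0) with
                         | 0%N => dflt | _.+1 => dflt end
  | t :: ts' => fun h i =>
      match i as i0 return T (nth tdef (t :: ts') i0) with
      | 0%N => h.1
      | i'.+1 => getH T dflt ts' h.2 i'
      end
  end.

Fixpoint dropH (T : tree -> Type) (ts : seq tree) : HL T ts -> forall i, HL T (dropS ts i) :=
  match ts as ts0 return HL T ts0 -> forall i, HL T (dropS ts0 i) with
  | [::] => fun h _ => h
  | t :: ts' => fun h i =>
      match i as i0 return HL T (dropS (t :: ts') i0) with
      | 0%N => h.2
      | i'.+1 => (h.1, dropH T ts' h.2 i')
      end
  end.

Fixpoint insP (f : tree -> finType) (ts : seq tree) (i : nat) {struct ts} :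
  PL f (dropS ts i) -> f (nth tdef ts i) -> PL f ts :=
  match ts as ts0 return PL f (dropS ts0 i) -> f (nth tdef ts0 i) -> PL f ts0 with
  | [::] => fun _ _ => tt
  | t :: ts' =>
      match i as i0 return PL f (dropS (t :: ts') i0) -> f (nth tdef (t :: ts') i0) -> PL f (t :: ts') with
      | 0%N => fun c k => (k, c)
      | i'.+1 => fun c k => (c.1, insP f ts' i' c.2 k)
      end
  end.

(* mode-i matricisation (i = position among the modes 1..m, counted from 0):
   rows indexed by mode i, columns by (mode 0, remaining modes). *)
Definition matI (f : tree -> finType) (r : nat) (ts : seq tree) (i : nat)
  (Z : 'I_r -> PL f ts -> C) : f (nth tdef ts i) -> ('I_r * PL f (dropS ts i))%type -> C :=
  fun k c => Z c.1 (insP f ts i c.2 k).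

Definition tenI (f : tree -> finType) (r : nat) (ts : seq tree) (i : nat)
  (M : f (nth tdef ts i) -> ('I_r * PL f (dropS ts i))%type -> C) : 'I_r -> PL f ts -> C :=
  fun a x => \sum_(c : PL f (dropS ts i)) \sum_(k : f (nth tdef ts i))
               ((insP f ts i c k == x)%:R * M k (a, c)).

Definition orthocols {J K : finType} (U : J -> K -> C) : Prop :=
  forall k k' : K, \sum_(j : J) conjc (U j k) * U j k' = (k == k')%:R.

Definition colspan {J K : finType} (U : J -> K -> C) (v : J -> C) : Prop :=
  exists x : K -> C, forall j, v j = \sum_(k : K) U j k * x k.

Definition colspan2 {J K1 K2 : finType} (A : J -> K1 -> C) (B : J -> K2 -> C) (v : J -> C) : Prop :=
  exists (x : K1 -> C) (y : K2 -> C),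
    forall j, v j = \sum_(k : K1) A j k * x k + \sum_(k : K2) B j k * y k.

Definition full_row_rank {J K : finType} (M : J -> K -> C) : Prop :=
  forall x : J -> C, (forall k, \sum_(j : J) x j * M j k = 0) -> forall j, x j = 0.

Definition inner {A B : finType} (X Y : A -> B -> C) : C :=
  \sum_(a : A) \sum_(b : B) conjc (X a b) * Y a b.

Definition solves {A B : finType} (Yc : R -> A -> B -> C) (F : (A -> B -> C) -> A -> B -> C)
  (t0 t1 : R) (Y0 : A -> B -> C) : Prop :=
  Yc t0 = Y0 /\
  (forall a b, {within [set x : R | t0 <= x <= t1], continuous (fun t => complex.Re (Yc t a b))} /\
               {within [set x : R | t0 <= x <= t1], continuous (fun t => complex.Im (Yc t a b))}) /\
  (forall t, t0 < t < t1 -> forall a b,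
      is_derive t (1 : R) (fun s => complex.Re (Yc s a b)) (complex.Re (F (Yc t) a b)) /\
      is_derive t (1 : R) (fun s => complex.Im (Yc s a b)) (complex.Im (F (Yc t) a b))).

(* X x_0 S^T : multiply the root connection tensor (resp. the leaf basis) *)
Definition rootMul (rk : tree -> nat) (r : nat) (t : tree) (S : 'I_r -> 'I_r -> C) :
  TTN rk r t -> TTN rk r t :=
  match t as t0 return TTN rk r t0 -> TTN rk r t0 with
  | Leaf l => fun U j k => \sum_(m : 'I_r) S m k * U j m
  | Node ts => fun X => (fun k ks => \sum_(m : 'I_r) S m k * X.1 m ks, X.2)
  end.

Definition zeroTTN (rk : tree -> nat) : TTN rk (rk tdef) tdef := fun _ _ => 0.

Section Integrator.
(* rk : ranks of the starting TTN; rkh : augmented ranks (of the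
   rank-augmented bases Uhat_sigma, sigma a proper subtree). *)
Variables (rk rkh : tree -> nat) (t0 t1 : R).

Local Notation kidT := (fun s => TTN rk (rk s) s).
Local Notation kidTh := (fun s => TTN rkh (rkh s) s).
Local Notation fullo := (fun s => full rk (rk s) s).
Local Notation fullh := (fun s => full rkh (rkh s) s).

(* V_{tau_i}^0 = mat_i( ten_i(Q^T) x_0 I x_{j<>i} U_{tau_j}^0 )^T *)
Definition Vmat (ts : seq tree) (kids : HL kidT ts) (i : nat)
  (Q : ('I_(rk (Node ts)) * PL (ordT rk) (dropS ts i))%type -> 'I_(rk (nth tdef ts i)) -> C) :
  ('I_(rk (Node ts)) * PL Idx (dropS ts i))%type -> 'I_(rk (nth tdef ts i)) -> C :=
  fun c k => mcS Idx (ordT rk) (dropS ts i)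
               (UmH kidT (ordT rk) fullo (dropS ts i) (dropH kidT ts kids i))
               (fun ks => Q (c.1, ks) k) c.2.

(* prolongation  pi_{tau,i}(Y) = ten_i((V mat_0(Y))^T) *)
Definition prolong (ts : seq tree) (kids : HL kidT ts) (i : nat) Q
  (Y : V rk (nth tdef ts i)) : V rk (Node ts) :=
  tenI Idx (rk (Node ts)) ts i
    (fun j c => \sum_(k : 'I_(rk (nth tdef ts i))) Vmat ts kids i Q c k * Y k j).

(* restriction  pi_{tau,i}^dagger(Z) = ten_0((mat_i(Z) V)^T) *)
Definition restrict (ts : seq tree) (kids : HL kidT ts) (i : nat) Q
  (Z : V rk (Node ts)) : V rk (nth tdef ts i) :=
  fun k j => \sum_(c : ('I_(rk (Node ts)) * PL Idx (dropS ts i))%type)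
               matI Idx (rk (Node ts)) ts i Z j c * Vmat ts kids i Q c k.

Definition Fred (ts : seq tree) (kids : HL kidT ts) (i : nat) Q
  (F : V rk (Node ts) -> V rk (Node ts)) : V rk (nth tdef ts i) -> V rk (nth tdef ts i) :=
  fun Y => restrict ts kids i Q (F (prolong ts kids i Q Y)).

(* QR decomposition  mat_i(C^0)^T = Q S^T, Q orthonormal columns, S^T upper triangular *)
Definition QRcond (ts : seq tree) (C0 : 'I_(rk (Node ts)) -> PL (ordT rk) ts -> C) (i : nat)
  (Q : ('I_(rk (Node ts)) * PL (ordT rk) (dropS ts i))%type -> 'I_(rk (nth tdef ts i)) -> C)
  (S : 'I_(rk (nth tdef ts i)) -> 'I_(rk (nth tdef ts i)) -> C) : Prop :=
  orthocols Q /\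
  (forall k l : 'I_(rk (nth tdef ts i)), (k < l)%N -> S k l = 0) /\
  (forall c k, matI (ordT rk) (rk (Node ts)) ts i C0 k c =
               \sum_(l : 'I_(rk (nth tdef ts i))) Q c l * S k l).

Definition Mhat (ts : seq tree) (kids : HL kidT ts) (kidsh : HL kidTh ts) (i : nat) :
  'I_(rkh (nth tdef ts i)) -> 'I_(rk (nth tdef ts i)) -> C :=
  fun a b => \sum_(j : Idx (nth tdef ts i))
     conjc (Umat rkh (rkh (nth tdef ts i)) (nth tdef ts i) (getH kidTh (fun _ _ => 0) ts kidsh i) j a) *
     Umat rk (rk (nth tdef ts i)) (nth tdef ts i) (getH kidT (fun _ _ => 0) ts kids i) j b.

Definition Chat0 (ts : seq tree) (C0 : 'I_(rk (Node ts)) -> PL (ordT rk) ts -> C)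
  (kids : HL kidT ts) (kidsh : HL kidTh ts) : 'I_(rk (Node ts)) -> PL (ordT rkh) ts -> C :=
  fun a => mcS (ordT rkh) (ordT rk) ts (Mhat ts kids kidsh) (C0 a).

(* Galerkin right-hand side
   Chat |-> F_tau(Chat x_0 I x_i Uhat_i) x_i Uhat_i^*  *)
Definition Galerkin (ts : seq tree) (kidsh : HL kidTh ts)
  (F : V rk (Node ts) -> V rk (Node ts))
  (Ch : 'I_(rk (Node ts)) -> PL (ordT rkh) ts -> C) : 'I_(rk (Node ts)) -> PL (ordT rkh) ts -> C :=
  let Uh := UmH kidTh (ordT rkh) fullh ts kidsh in
  let Z := F (fun a js => mcS Idx (ordT rkh) ts Uh (Ch a) js) in
  fun a ks => mcS (ordT rkh) Idx ts (fun i k j => conjc (Uh i j k)) (Z a) ks.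

(* Integ t Y0 F Y1 Ch0  :  the rank-augmenting TTN integrator, called on
   (t, Y0, F, t0, t1), may return  Yhat^1 = Y1  and  Chat^0 = Ch0
   (for some admissible choice of QR decompositions, orthonormal bases and
   with exactly solved differential equations).
   ChildInt t X0 Y0 F Xh : step (1) for a direct subtree t with starting
   basis X0 (= X_{tau_i}^0), starting value Y0 (= Y_{tau_i}^0) and reduced
   function F (= F_{tau_i}) may produce Xhat_{tau_i} = Xh. *)
Inductive Integ : forall t : tree, TTN rk (rk t) t -> (V rk t -> V rk t) ->
                  TTN rkh (rk t) t -> ConnT rkh (rk t) t -> Prop :=
| IntegNode : forall (ts : seq tree)
    (C0 : 'I_(rk (Node ts)) -> PL (ordT rk) ts -> C) (kids : HL kidT ts)
    (F : V rk (Node ts) -> V rk (Node ts))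
    (kidsh : HL kidTh ts)
    (Q : forall i, ('I_(rk (Node ts)) * PL (ordT rk) (dropS ts i))%type -> 'I_(rk (nth tdef ts i)) -> C)
    (S : forall i, 'I_(rk (nth tdef ts i)) -> 'I_(rk (nth tdef ts i)) -> C)
    (Ch : R -> 'I_(rk (Node ts)) -> PL (ordT rkh) ts -> C),
    (forall i, (i < size ts)%N -> QRcond ts C0 i (Q i) (S i)) ->
    (forall i, (i < size ts)%N ->
       ChildInt (nth tdef ts i)
         (getH kidT (fun _ _ => 0) ts kids i)
         (rootMul rk (rk (nth tdef ts i)) (nth tdef ts i) (S i) (getH kidT (fun _ _ => 0) ts kids i))
         (Fred ts kids i (Q i) F)
         (getH kidTh (fun _ _ => 0) ts kidsh i)) ->
    solves Ch (Galerkin ts kidsh F) t0 t1 (Chat0 ts C0 kids kidsh) ->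
    Integ (Node ts) (C0, kids) F (Ch t1, kidsh) (Chat0 ts C0 kids kidsh)
with ChildInt : forall t : tree, TTN rk (rk t) t -> TTN rk (rk t) t -> (V rk t -> V rk t) ->
                TTN rkh (rkh t) t -> Prop :=
| ChildLeaf : forall (l : nat) (X0 Y0 : TTN rk (rk (Leaf l)) (Leaf l))
    (F : V rk (Leaf l) -> V rk (Leaf l)) (Yc : R -> V rk (Leaf l))
    (Uh : TTN rkh (rkh (Leaf l)) (Leaf l)),
    solves Yc F t0 t1 (full rk (rk (Leaf l)) (Leaf l) Y0) ->
    orthocols Uh ->
    (forall v, colspan Uh v <-> colspan2 (fun j k => Yc t1 k j) X0 v) ->
    ChildInt (Leaf l) X0 Y0 F Uh
| ChildNode : forall (ts : seq tree) (X0 Y0 : TTN rk (rk (Node ts)) (Node ts))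
    (F : V rk (Node ts) -> V rk (Node ts))
    (Y1 : TTN rkh (rk (Node ts)) (Node ts))
    (Ch0 : 'I_(rk (Node ts)) -> PL (ordT rkh) ts -> C)
    (Qh : PL (ordT rkh) ts -> 'I_(rkh (Node ts)) -> C),
    Integ (Node ts) Y0 F Y1 Ch0 ->
    orthocols Qh ->
    (forall v, colspan Qh v <-> colspan2 (fun ks a => Y1.1 a ks) (fun ks a => Ch0 a ks) v) ->
    ChildInt (Node ts) X0 Y0 F ((fun a ks => Qh ks a), Y1.2).

End Integrator.

Fixpoint HLall (T : tree -> Type) (P : forall s, T s -> Prop) (ts : seq tree) : HL T ts -> Prop :=
  match ts as ts0 return HL T ts0 -> Prop with
  | [::] => fun _ => True
  | t :: ts' => fun h => P t h.1 /\ HLall T P ts' h.2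
  end.

Fixpoint ortho_below (rk : tree -> nat) (r0 : nat) (t : tree) : TTN rk r0 t -> Prop :=
  match t as t0 return TTN rk r0 t0 -> Prop with
  | Leaf _ => fun _ => True
  | Node ts => fun X =>
      HLall (fun s => TTN rk (rk s) s)
        (fun s Xs => orthocols (Umat rk (rk s) s Xs) /\ ortho_below rk (rk s) s Xs) ts X.2
  end.

Definition full_ml_rank (rk : tree -> nat) (r0 : nat) (ts : seq tree)
  (C0 : 'I_r0 -> PL (ordT rk) ts -> C) : Prop :=
  full_row_rank C0 /\
  forall i, (i < size ts)%N -> full_row_rank (matI (ordT rk) r0 ts i C0).

Fixpoint full_tree_rank (rk : tree -> nat) (r0 : nat) (t : tree) : TTN rk r0 t -> Prop :=
  match t as t0 return TTN rk r0 t0 -> Prop with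
  | Leaf _ => fun _ => True
  | Node ts => fun X =>
      full_ml_rank rk r0 ts X.1 /\
      HLall (fun s => TTN rk (rk s) s) (fun s Xs => full_tree_rank rk (rk s) s Xs) ts X.2
  end.

Definition linear_op {A B : finType} (H : (A -> B -> C) -> A -> B -> C) : Prop :=
  forall (al be : C) (Y Z : A -> B -> C),
    H (fun a b => al * Y a b + be * Z a b) = (fun a b => al * H Y a b + be * H Z a b).

Definition self_adjoint {A B : finType} (H : (A -> B -> C) -> A -> B -> C) : Prop :=
  forall Y Z : A -> B -> C, inner (H Y) Z = inner Y (H Z).

Definition energy {A B : finType} (H : (A -> B -> C) -> A -> B -> C) (Y : A -> B -> C) : C :=
  inner Y (H Y).

End TTNdefs.

(* Main.v *)
Require Import Defs.
From HB Require Import structures.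
From mathcomp Require Import all_boot all_order all_algebra.
From mathcomp Require Import complex.
From mathcomp Require Import all_classical all_reals topology normedtype derive.
From mathcomp Require Import ring.
Import Order.TTheory GRing.Theory Num.Theory.
Local Open Scope ring_scope.

Section Gen.
Context {R : realType}.
Local Notation C := (R[i]).
Local Notation mc := (@mcS R _ _ _).
Local Notation MT f g ts := (forall i, f (nth tdef ts i) -> g (nth tdef ts i) -> C).

Definition islin {K : finType} (L : (K -> C) -> C) :=
  forall (a b : C) X Y, L (fun k => a * X k + b * Y k) = a * L X + b * L Y.

Lemma islin0 (K : finType) (L : (K -> C) -> C) : islin L -> L (fun _ => 0) = 0.
Proof.
move=> HL; have := HL 0 0 (fun _ => 0) (fun _ => 0).
have -> : (fun k : K => 0 * (fun _ : K => 0 : C) k + 0 * (fun _ => 0 : C) k) = (fun _ => 0).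
  by apply: funext => k; rewrite mul0r addr0.
by rewrite !mul0r addr0.
Qed.

Lemma lin_sum (K : finType) (I : Type) (L : (K -> C) -> C) (s : seq I) (c : I -> C) (G : I -> K -> C) :
  islin L -> L (fun k => \sum_(z <- s) c z * G z k) = \sum_(z <- s) c z * L (G z).
Proof.
move=> HL; elim: s => [|z s IH].
  under eq_fun do rewrite big_nil. by rewrite big_nil islin0.
under eq_fun do rewrite big_cons. rewrite big_cons -IH.
have := HL (c z) 1 (G z) (fun k => \sum_(j <- s) c j * G j k).
under eq_fun do rewrite mul1r. by rewrite mul1r.
Qed.

Lemma delta_sum (K : finType) (G : K -> C) k : G k = \sum_y G y * (k == y)%:R.
Proof.
rewrite (bigD1 k) //= eqxx mulr1 big1 ?addr0 // => y; rewrite eq_sym => /negbTE ->.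
by rewrite mulr0.
Qed.

Lemma lin_rep (K : finType) (L : (K -> C) -> C) G : islin L -> L G = \sum_y G y * L (fun k => (k == y)%:R).
Proof.
move=> HL; rewrite -lin_sum //; congr L; apply: funext => k; exact: delta_sum.
Qed.

Lemma mc_lin {f g : tree -> finType} (ts : seq tree) (M : MT f g ts) x : islin (fun G => mc M G x).
Proof.
elim: ts M x => [|t ts IH] M x a b G G' //=.
rewrite !mulr_sumr -big_split /=; apply: eq_bigr => y _.
rewrite (IH (fun i => M i.+1) x.2 a b (fun ys => G (y, ys)) (fun ys => G' (y, ys))).
by rewrite mulrDr !mulrA ![_ * M _ _ _]mulrC.
Qed.

Lemma mc_sum {f g : tree -> finType} (ts : seq tree) (M : MT f g ts) x (I : Type) (s : seq I) c (G : I -> _ -> C) :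
  mc M (fun y => \sum_(z <- s) c z * G z y) x = \sum_(z <- s) c z * mc M (G z) x.
Proof. have H := (@lin_sum _ _ (fun G => mc M G x) s c G (mc_lin ts M x)). simpl in H. exact H. Qed.

Lemma mc_ext {f g : tree -> finType} (ts : seq tree) (M M' : MT f g ts) G G' x :
  (forall i, (i < size ts)%N -> forall x y, M i x y = M' i x y) -> (forall y, G y = G' y) ->
  mc M G x = mc M' G' x.
Proof.
elim: ts M M' G G' x => [|t ts IH] M M' G G' x HM HG /=; first exact: HG.
apply: eq_bigr => y _; rewrite (HM 0%N) //; congr (_ * _); apply: IH.
  by move=> i Hi; apply: (HM i.+1).
by move=> ys; apply: HG.
Qed.

Lemma mc_extG {f g : tree -> finType} (ts : seq tree) (M : MT f g ts) G G' x :
  (forall y, G y = G' y) -> mc M G x = mc M G' x.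
Proof. by move=> HG; apply: mc_ext. Qed.

Lemma mc_comp {f g h : tree -> finType} (ts : seq tree) (M : MT f g ts) (N : MT g h ts) G x :
  mc M (mc N G) x = mc (fun i x z => \sum_y M i x y * N i y z) G x.
Proof.
elim: ts M N G x => [|t ts IH] M N G x //=.
under eq_bigr => y _ do rewrite (mc_sum _ (fun i => M i.+1) x.2 _ _ (N 0%N y) (fun z ys => mc (fun i => N i.+1) (fun zs => G (z, zs)) ys)).
under eq_bigr => y _ do under eq_bigr => z _ do rewrite IH.
rewrite /=. under eq_bigr do rewrite mulr_sumr. rewrite exchange_big /=.
apply: eq_bigr => z _; rewrite mulr_suml; apply: eq_bigr => y _; by rewrite mulrA.
Qed.

Lemma mc_id {f : tree -> finType} (ts : seq tree) (M : MT f f ts) G x :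
  (forall i, (i < size ts)%N -> forall x y, M i x y = (x == y)%:R) ->
  mc M G x = G x.
Proof.
elim: ts M G x => [|t ts IH] M G x HM /=; first by case: x.
rewrite (bigD1 x.1) //= HM // eqxx mul1r big1 ?addr0.
  by rewrite IH; [case: x | move=> i Hi; apply: (HM i.+1)].
by move=> y; rewrite HM // eq_sym => /negbTE ->; rewrite mul0r.
Qed.

Lemma mc0 {f g : tree -> finType} (ts : seq tree) (M : MT f g ts) x : mc M (fun _ => 0) x = 0.
Proof. exact: islin0 (mc_lin ts M x). Qed.

Lemma mc_conj_delta {f g : tree -> finType} (ts : seq tree) (M : MT f g ts) x0 y0 :
  mc (fun i y x => (M i x y)^*%C) (fun x => (x == x0)%:R) y0 =
  ((mc M (fun y => (y == y0)%:R) x0)^*)%C.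
Proof.
elim: ts M x0 y0 => [|t ts IH] M x0 y0 /=.
  by case: x0; case: y0 => /=; apply/eqP; rewrite eq_complex /= oppr0 !eqxx.
case: x0 => a0 xs0; case: y0 => b0 ys0 /=.
rewrite (bigD1 a0) //= big1 ?addr0; last first.
  move=> x /negbTE Hx; rewrite (@mc_extG _ _ _ _ _ (fun _ => 0)) ?mc0 ?mulr0 //.
  by move=> ys; rewrite xpair_eqE Hx.
rewrite (bigD1 b0) //= big1 ?addr0; last first.
  move=> y /negbTE Hy; rewrite (@mc_extG _ _ _ _ _ (fun _ => 0)) ?mc0 ?mulr0 //.
  by move=> ys; rewrite xpair_eqE Hy.
rewrite rmorphM /=; congr (_ * _).
transitivity (mc (fun i y x => (M i.+1 x y)^*%C) (fun ys => (ys == xs0)%:R) ys0).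
  by apply: mc_extG => ys; rewrite xpair_eqE eqxx.
rewrite (IH (fun i => M i.+1)); congr conjc; apply: mc_extG => ys.
by rewrite xpair_eqE eqxx.
Qed.


Lemma mc_rep {f g : tree -> finType} (ts : seq tree) (M : MT f g ts) G x :
  mc M G x = \sum_y G y * mc M (fun y' => (y' == y)%:R) x.
Proof. exact: (@lin_rep _ (fun G => mc M G x) G (mc_lin ts M x)). Qed.

Lemma mc_adj {f g : tree -> finType} (ts : seq tree) (M : MT f g ts) G W :
  \sum_x ((mc M G x)^*%C) * W x = \sum_y ((G y)^*%C) * mc (fun i y x => (M i x y)^*%C) W y.
Proof.
under eq_bigr => x _ do rewrite mc_rep rmorph_sum mulr_suml.
rewrite exchange_big /=; apply: eq_bigr => y _.
rewrite mc_rep mulr_sumr; apply: eq_bigr => x _.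
by rewrite (mc_conj_delta ts M x y) rmorphM /= -mulrA [W x * _]mulrC.
Qed.

Lemma mc_gram {f g : tree -> finType} (ts : seq tree) (M : MT f g ts) G G' :
  (forall i, (i < size ts)%N -> forall y y', \sum_x ((M i x y)^*%C) * M i x y' = (y == y')%:R) ->
  \sum_x ((mc M G x)^*%C) * mc M G' x = \sum_y ((G y)^*%C) * G' y.
Proof.
move=> HM; rewrite mc_adj; apply: eq_bigr => y _; congr (_ * _).
rewrite mc_comp mc_id //.
Qed.

End Gen.

Section Lin.
Context {R : realType}.
Local Notation C := (R[i]).

Lemma UmH_get (n : nat -> nat) (T : tree -> Type) (g : tree -> finType)
  (fl : forall s, T s -> g s -> Idx n s -> C) ts h dflt i :
  (i < size ts)%N -> forall j k, UmH R n T g fl ts h i j k = fl (nth tdef ts i) (getH T dflt ts h i) k j.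
Proof.
elim: ts h i => [|t ts IH] h [|i] //= Hi j k.
exact: IH.
Qed.

Lemma HLall_get (T : tree -> Type) (P : forall s, T s -> Prop) ts h dflt :
  HLall T P ts h -> forall i, (i < size ts)%N -> P (nth tdef ts i) (getH T dflt ts h i).
Proof.
elim: ts h => [|t ts IH] h //= [H1 H2] [|i] //= Hi.
exact: IH.
Qed.

Lemma proj_col {J K : finType} (U : J -> K -> C) v :
  orthocols R U -> colspan R U v -> forall j, \sum_k U j k * (\sum_j' ((U j' k)^*%C) * v j') = v j.
Proof.
move=> HO [x Hx] j; rewrite Hx; apply: eq_bigr => k _; congr (_ * _).
under eq_bigr => j' _ do rewrite Hx mulr_sumr.
rewrite exchange_big /=.
transitivity (\sum_k' (k == k')%:R * x k').
  apply: eq_bigr => k' _; rewrite -HO mulr_suml; apply: eq_bigr => j' _; by rewrite mulrA.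
rewrite (bigD1 k) //= eqxx mul1r big1 ?addr0 // => k' Hk.
by rewrite eq_sym (negbTE Hk) mul0r.
Qed.

Lemma frr_inv (r : nat) (S : 'I_r -> 'I_r -> C) : full_row_rank R S ->
  exists T : 'I_r -> 'I_r -> C, (forall m b, \sum_k S m k * T k b = (m == b)%:R) /\
                                (forall m b, \sum_k T m k * S k b = (m == b)%:R).
Proof.
move=> HS.
pose A : 'M[C]_r := \matrix_(m, k) S m k.
have HA : row_free A.
  rewrite -kermx_eq0; apply/eqP/matrixP => i j; rewrite [RHS]mxE.
  have := sub_kermxP (row_sub i (kermx A)) => Hk.
  apply: (HS (fun m => kermx A i m)) => k.
  have := congr1 (fun M : 'M[C]_(1,r) => M 0 k) Hk; rewrite [RHS]mxE [LHS]mxE => Hk'; rewrite -[RHS]Hk'.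
  by apply: eq_bigr => m _; rewrite !mxE.
have HU : A \in unitmx by rewrite -row_free_unit.
exists (fun k b => invmx A k b); split=> m b.
  have := congr1 (fun M : 'M[C]_r => M m b) (mulmxV HU); rewrite !mxE => <-.
  by apply: eq_bigr => k _; rewrite mxE.
have := congr1 (fun M : 'M[C]_r => M m b) (mulVmx HU); rewrite !mxE => <-.
by apply: eq_bigr => k _; rewrite mxE.
Qed.


Lemma frr_QR {J K : finType} r (M : J -> K -> C) (Q : K -> 'I_r -> C) (S : J -> 'I_r -> C) :
  (forall c k, M k c = \sum_l Q c l * S k l) -> full_row_rank R M -> full_row_rank R S.
Proof.
move=> HM HF x Hx; apply: HF => c.
under eq_bigr => k _ do rewrite HM mulr_sumr.
rewrite exchange_big /= big1 // => l _.
transitivity (Q c l * \sum_j x j * S j l); last by rewrite Hx mulr0.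
rewrite mulr_sumr; apply: eq_bigr => k _; by rewrite mulrCA.
Qed.

Lemma frr_mode0 {K : finType} r (Cm : 'I_r -> K -> C) (S : 'I_r -> 'I_r -> C) :
  full_row_rank R S -> full_row_rank R Cm ->
  full_row_rank R (fun k ks => \sum_m S m k * Cm m ks).
Proof.
move=> HS HC x Hx.
have [T [_ HT]] := frr_inv _ _ HS.
have Hy : forall m, \sum_k S m k * x k = 0.
  apply: (HC (fun m => \sum_k S m k * x k)) => ks; rewrite -[RHS](Hx ks).
  under eq_bigr => m _ do rewrite mulr_suml.
  rewrite exchange_big /=; apply: eq_bigr => k _; rewrite mulr_sumr.
  by apply: eq_bigr => m _; rewrite mulrAC mulrC.
move=> b; rewrite (delta_sum _ x b).
transitivity (\sum_m T b m * \sum_k S m k * x k).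
  under [RHS]eq_bigr => m _ do rewrite mulr_sumr.
  rewrite exchange_big /=; apply: eq_bigr => k _.
  by rewrite -HT mulr_sumr; apply: eq_bigr => m _; rewrite mulrC -mulrA.
by rewrite big1 // => m _; rewrite Hy mulr0.
Qed.

Lemma frr_pair {J P : finType} r (N : J -> ('I_r * P)%type -> C) (S : 'I_r -> 'I_r -> C) :
  full_row_rank R S -> full_row_rank R N ->
  full_row_rank R (fun k ac => \sum_m S m ac.1 * N k (m, ac.2)).
Proof.
move=> HS HN x Hx; apply: HN => [[m c]].
pose y := fun m => \sum_k x k * N k (m, c).
suff : y m = 0 by [].
apply: HS => a; rewrite -[RHS](Hx (a, c)) /y.
under eq_bigr => m' _ do rewrite mulr_suml.
rewrite exchange_big /=; apply: eq_bigr => k _; rewrite mulr_sumr.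
by apply: eq_bigr => m' _; rewrite -mulrA [N _ _ * _]mulrC.
Qed.


Lemma ftr_rootMul (n : nat -> nat) (rk : tree -> nat) (t : tree) (r : nat)
  (S : 'I_r -> 'I_r -> C) (X : TTN R n rk r t) :
  full_row_rank R S -> full_tree_rank R n rk r t X ->
  full_tree_rank R n rk r t (rootMul R n rk r t S X).
Proof.
case: t X => [l|ts] X HS //=.
case: X => C0 kids /= [[H0 Hi] Hk]; split => //; split.
  exact: frr_mode0.
move=> i Hi'; exact: (frr_pair _ _ _ HS (Hi i Hi')).
Qed.

End Lin.

Scheme Integ_min := Minimality for Integ Sort Prop with ChildInt_min := Minimality for ChildInt Sort Prop.

Section Main.
Variables (R : realType) (n : nat -> nat) (rk rkh : tree -> nat) (t0 t1 : R).
Local Notation C := (R[i]).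
Local Notation kidT := (fun s => TTN R n rk (rk s) s).
Local Notation kidTh := (fun s => TTN R n rkh (rkh s) s).
Local Notation fullh := (fun s => full R n rkh (rkh s) s).

Definition PInt (t : tree) : TTN R n rk (rk t) t -> (V R n rk t -> V R n rk t) ->
   TTN R n rkh (rk t) t -> ConnT R rkh (rk t) t -> Prop :=
  match t as t0 return TTN R n rk (rk t0) t0 -> (V R n rk t0 -> V R n rk t0) ->
   TTN R n rkh (rk t0) t0 -> ConnT R rkh (rk t0) t0 -> Prop with
  | Leaf _ => fun _ _ _ _ => False
  | Node ts => fun Y0 F Y1 Ch0 =>
     full_tree_rank R n rk (rk (Node ts)) (Node ts) Y0 ->
     (forall i, (i < size ts)%N -> orthocols R (Umat R n rkh (rkh (nth tdef ts i)) (nth tdef ts i)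
                                        (getH kidTh (fun _ _ => 0) ts Y1.2 i))) /\
     (forall a js, mcS R (Idx n) (ordT rkh) ts (UmH R n kidTh (ordT rkh) fullh ts Y1.2) (Ch0 a) js
                   = full R n rk (rk (Node ts)) (Node ts) Y0 a js) /\
     (exists Ch, solves R Ch (Galerkin R n rk rkh ts Y1.2 F) t0 t1 Ch0 /\ Y1.1 = Ch t1)
  end.

Definition QChild (t : tree) (X0 Y0 : TTN R n rk (rk t) t) (F : V R n rk t -> V R n rk t)
  (Xh : TTN R n rkh (rkh t) t) : Prop :=
  forall S : 'I_(rk t) -> 'I_(rk t) -> C, full_row_rank R S ->
    Y0 = rootMul R n rk (rk t) t S X0 -> full_tree_rank R n rk (rk t) t X0 ->
    orthocols R (Umat R n rkh (rkh t) t Xh) /\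
    forall j b, \sum_a Umat R n rkh (rkh t) t Xh j a *
        (\sum_j' ((Umat R n rkh (rkh t) t Xh j' a)^*%C) * Umat R n rk (rk t) t X0 j' b)
      = Umat R n rk (rk t) t X0 j b.

Lemma main_ind t Y0 F Y1 Ch0 : Integ R n rk rkh t0 t1 t Y0 F Y1 Ch0 -> PInt t Y0 F Y1 Ch0.
Proof.
move=> HI; apply: (@Integ_min R n rk rkh t0 t1 PInt QChild) HI.
- move=> ts C0 kids F' kidsh Q S Ch HQR _ IHc Hsol /= [[H0 Hrk] Hkids].
  have HS i (Hi : (i < size ts)%N) : full_row_rank R (S i).
    exact: (frr_QR _ _ _ _ (HQR i Hi).2.2 (Hrk i Hi)).
  have IH i (Hi : (i < size ts)%N) := IHc i Hi (S i) (HS i Hi) erefl (HLall_get _ _ _ _ _ Hkids i Hi).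
  split; first by move=> i Hi; exact: (IH i Hi).1.
  split; last by exists Ch.
  move=> a js; rewrite /Chat0 mc_comp /=.
  apply: mc_ext => // i Hi x z.
  rewrite (UmH_get n kidT (ordT rk) (fun s => full R n rk (rk s) s) ts kids (fun _ _ => 0) i Hi).
  under eq_bigr => y _ do rewrite (UmH_get n kidTh (ordT rkh) fullh ts kidsh (fun _ _ => 0) i Hi).
  exact: ((IH i Hi).2 x z).
- move=> l X0 Y0' F' Yc Uh _ HO Hspan S' HS' HY Hftr; split; first exact: HO.
  move=> j b.
  have Hcol : colspan R Uh (fun j => X0 j b).
    apply/Hspan; exists (fun _ => 0), (fun k => (k == b)%:R) => j'.
    rewrite big1 ?add0r; last by move=> k _; rewrite mulr0.
    rewrite (bigD1 b) //= eqxx mulr1 big1 ?addr0 // => k /negbTE ->; by rewrite mulr0.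
  exact: (proj_col _ _ HO Hcol j).
- move=> ts X0 Y0' F' Y1' Ch0' Qh _ IHP HQh Hspan S' HS' HY Hftr.
  case: X0 HY Hftr => C0 kids HY Hftr; subst Y0'.
  have Hftr' := ftr_rootMul _ _ _ _ _ _ HS' Hftr.
  have [HA [HB _]] := IHP Hftr'.
  set U := UmH R n kidTh (ordT rkh) fullh ts Y1'.2.
  have HU : forall i, (i < size ts)%N -> forall y y', \sum_x ((U i x y)^*%C) * U i x y' = (y == y')%:R.
    move=> i Hi y y'; rewrite /U.
    under eq_bigr => x _ do rewrite !(UmH_get n kidTh (ordT rkh) fullh ts Y1'.2 (fun _ _ => 0) i Hi).
    exact: (HA i Hi y y').
  have HOx : orthocols R (Umat R n rkh (rkh (Node ts)) (Node ts) ((fun a ks => Qh ks a), Y1'.2)).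
    move=> a b; rewrite /Umat /=.
    rewrite (mc_gram ts U _ _ HU); exact: HQh.
  split => // j b.
  have [T [HT _]] := frr_inv _ _ HS'.
  have Hz : forall a, exists z : 'I_(rkh (Node ts)) -> C, forall ks, Ch0' a ks = \sum_k Qh ks k * z k.
    move=> a; apply/(Hspan (fun ks => Ch0' a ks)); exists (fun _ => 0), (fun k => (k == a)%:R) => ks.
    rewrite big1 ?add0r; last by move=> k _; rewrite mulr0.
    rewrite (bigD1 a) //= eqxx mulr1 big1 ?addr0 // => k /negbTE ->; by rewrite mulr0.
  have [z Hz'] := choice Hz.
  pose W m := mcS R (Idx n) (ordT rk) ts (UmH R n kidT (ordT rk) (fun s => full R n rk (rk s) s) ts kids) (C0 m).
  have E1 : forall a js, mcS R (Idx n) (ordT rkh) ts U (Ch0' a) js = \sum_k z a k * mcS R (Idx n) (ordT rkh) ts U (fun ks => Qh ks k) js.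
    move=> a js; rewrite -(mc_sum ts U js _ (index_enum _) (z a) (fun k ks => Qh ks k)).
    apply: mc_extG => ks; rewrite Hz'; apply: eq_bigr => k _; exact: mulrC.
  have E2 : forall a js, mcS R (Idx n) (ordT rkh) ts U (Ch0' a) js = \sum_m S' m a * W m js.
    move=> a js; rewrite HB /=; exact: mc_sum.
  have Hcol : colspan R (Umat R n rkh (rkh (Node ts)) (Node ts) ((fun a ks => Qh ks a), Y1'.2))
                        (fun js => Umat R n rk (rk (Node ts)) (Node ts) (C0, kids) js b).
    exists (fun k => \sum_a T a b * z a k) => js.
    have E3 : \sum_a T a b * mcS R (Idx n) (ordT rkh) ts U (Ch0' a) js = W b js.
      under eq_bigr => a _ do rewrite E2 mulr_sumr.
      rewrite exchange_big /=.
      transitivity (\sum_m (m == b)%:R * W m js).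
        apply: eq_bigr => m _; rewrite -HT mulr_suml; apply: eq_bigr => a _.
        by rewrite mulrA [T a b * S' m a]mulrC.
      rewrite (bigD1 b) //= eqxx mul1r big1 ?addr0 // => m /negbTE ->; by rewrite mul0r.
    rewrite /Umat /= -[LHS]E3.
    transitivity (\sum_a T a b * \sum_k z a k * mcS R (Idx n) (ordT rkh) ts U (Qh^~ k) js).
      by apply: eq_bigr => a _; congr (_ * _); exact: E1.
    under eq_bigr => a _ do rewrite mulr_sumr.
    rewrite exchange_big /=; apply: eq_bigr => k _.
    rewrite mulr_sumr; apply: eq_bigr => a _.
    by rewrite mulrA mulrC.
  exact: (proj_col _ _ HOx Hcol j).
Qed.

End Main.

Section Ana.
Import numFieldNormedType.Exports.
Local Open Scope classical_set_scope.
Context {R : realType}.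
Local Notation C := (R[i]).
Variables t0 t1 : R.

Lemma ReD (x y : C) : complex.Re (x + y) = complex.Re x + complex.Re y. Proof. by case: x; case: y. Qed.
Lemma ImD (x y : C) : complex.Im (x + y) = complex.Im x + complex.Im y. Proof. by case: x; case: y. Qed.
Lemma ReM (x y : C) : complex.Re (x * y) = complex.Re x * complex.Re y - complex.Im x * complex.Im y.
Proof. by case: x; case: y. Qed.
Lemma ImM (x y : C) : complex.Im (x * y) = complex.Re x * complex.Im y + complex.Im x * complex.Re y.
Proof. by case: x => a b; case: y => c d /=. Qed.
Lemma ReC (x : C) : complex.Re (x^*)%C = complex.Re x. Proof. by case: x. Qed.
Lemma ImC (x : C) : complex.Im (x^*)%C = - complex.Im x. Proof. by case: x. Qed.
Lemma Re0 : complex.Re (0 : C) = 0. Proof. by []. Qed.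
Lemma Im0 : complex.Im (0 : C) = 0. Proof. by []. Qed.

Definition Dg (g g' : R -> C) :=
  ({within [set x : R | t0 <= x <= t1], continuous (fun s => complex.Re (g s))} /\
   {within [set x : R | t0 <= x <= t1], continuous (fun s => complex.Im (g s))}) /\
  forall t, t0 < t < t1 -> is_derive t 1 (fun s => complex.Re (g s)) (complex.Re (g' t)) /\
                           is_derive t 1 (fun s => complex.Im (g s)) (complex.Im (g' t)).

Lemma Dg_ext g g' h h' : (forall s, g s = h s) -> (forall t, t0 < t < t1 -> g' t = h' t) ->
  Dg g g' -> Dg h h'.
Proof.
move=> Hgh Hd [Hc Hder]; have -> : h = g by apply: funext => s; rewrite Hgh.
split=> // t Ht; rewrite -Hd //; exact: Hder.
Qed.

Lemma Dg_cst c : Dg (fun _ => c) (fun _ => 0).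
Proof.
split; first by split=> x; exact: cvg_cst.
move=> t _; split; exact: is_derive_cst.
Qed.

Lemma Dg_add f f' g g' : Dg f f' -> Dg g g' -> Dg (fun s => f s + g s) (fun s => f' s + g' s).
Proof.
move=> [[Hf1 Hf2] Hf] [[Hg1 Hg2] Hg]; rewrite /Dg.
have -> : (fun s => complex.Re (f s + g s)) = (fun s => complex.Re (f s) + complex.Re (g s)).
  by apply: funext => s; rewrite ReD.
have -> : (fun s => complex.Im (f s + g s)) = (fun s => complex.Im (f s) + complex.Im (g s)).
  by apply: funext => s; rewrite ImD.
split; first by split=> x; apply: cvgD; [exact: Hf1|exact: Hg1|exact: Hf2|exact: Hg2].
move=> t Ht; have [Df1 Df2] := Hf t Ht; have [Dg1 Dg2] := Hg t Ht.
rewrite ReD ImD; split.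
  by have := is_deriveD Df1 Dg1.
by have := is_deriveD Df2 Dg2.
Qed.

Lemma Dg_mul f f' g g' : Dg f f' -> Dg g g' ->
  Dg (fun s => f s * g s) (fun s => f' s * g s + f s * g' s).
Proof.
move=> [[Hf1 Hf2] Hf] [[Hg1 Hg2] Hg]; rewrite /Dg.
have -> : (fun s => complex.Re (f s * g s)) =
   (fun s => complex.Re (f s) * complex.Re (g s) + - (complex.Im (f s) * complex.Im (g s))).
  by apply: funext => s; rewrite ReM.
have -> : (fun s => complex.Im (f s * g s)) =
   (fun s => complex.Re (f s) * complex.Im (g s) + complex.Im (f s) * complex.Re (g s)).
  by apply: funext => s; rewrite ImM.
split.
  split=> x.
    apply: cvgD; first by apply: cvgM; [exact: Hf1|exact: Hg1].
    by apply: cvgN; apply: cvgM; [exact: Hf2|exact: Hg2].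
  apply: cvgD; first by apply: cvgM; [exact: Hf1|exact: Hg2].
  by apply: cvgM; [exact: Hf2|exact: Hg1].
move=> t Ht; have [Df1 Df2] := Hf t Ht; have [Dg1 Dg2] := Hg t Ht.
split.
  have := is_deriveD (is_deriveM Df1 Dg1) (is_deriveN (is_deriveM Df2 Dg2)).
  move=> H; apply: (is_derive_eq H).
  rewrite ReD !ReM /GRing.scale /=; ring.
have := is_deriveD (is_deriveM Df1 Dg2) (is_deriveM Df2 Dg1).
move=> H; apply: (is_derive_eq H).
rewrite ImD !ImM /GRing.scale /=; ring.
Qed.

Lemma Dg_conj f f' : Dg f f' -> Dg (fun s => (f s)^*%C) (fun s => (f' s)^*%C).
Proof.
move=> [[Hf1 Hf2] Hf]; rewrite /Dg.
have -> : (fun s => complex.Re ((f s)^*)%C) = (fun s => complex.Re (f s)).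
  by apply: funext => s; rewrite ReC.
have -> : (fun s => complex.Im ((f s)^*)%C) = (fun s => - complex.Im (f s)).
  by apply: funext => s; rewrite ImC.
split; first by split=> x; [exact: Hf1| apply: cvgN; exact: Hf2].
move=> t Ht; have [Df1 Df2] := Hf t Ht; rewrite ReC ImC; split=> //.
by have := is_deriveN Df2.
Qed.

Lemma Dg_sum (I : Type) (s : seq I) (F F' : I -> R -> C) : (forall i, Dg (F i) (F' i)) ->
  Dg (fun x => \sum_(i <- s) F i x) (fun x => \sum_(i <- s) F' i x).
Proof.
move=> HF; elim: s => [|i s IH].
  by apply: (Dg_ext _ _ _ _ _ _ (Dg_cst 0)) => [x|x _]; rewrite big_nil.
apply: (Dg_ext _ _ _ _ _ _ (Dg_add _ _ _ _ (HF i) IH)) => [x|x _]; by rewrite big_cons.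
Qed.

Lemma Dg_const0 g : t0 < t1 -> Dg g (fun _ => 0) -> g t1 = g t0.
Proof.
move=> Ht [[Hc1 Hc2] Hd].
have E1 : complex.Re (g t1) = complex.Re (g t0).
  have Hc : {within `[t0, t1], continuous (fun s => complex.Re (g s))} by rewrite set_itvcc.
  have [c _ Hc'] := @MVT R (fun s => complex.Re (g s)) (fun _ => 0) t0 t1 Ht
    (fun x Hx => (Hd x (Hx : t0 < x < t1)).1) Hc.
  by apply/eqP; rewrite -subr_eq0 Hc' mul0r.
have E2 : complex.Im (g t1) = complex.Im (g t0).
  have Hc : {within `[t0, t1], continuous (fun s => complex.Im (g s))} by rewrite set_itvcc.
  have [c _ Hc'] := @MVT R (fun s => complex.Im (g s)) (fun _ => 0) t0 t1 Ht
    (fun x Hx => (Hd x (Hx : t0 < x < t1)).2) Hc.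
  by apply/eqP; rewrite -subr_eq0 Hc' mul0r.
by move: E1 E2; case: (g t1); case: (g t0) => /= a b c d -> ->.
Qed.

End Ana.

Section En.
Context {R : realType}.
Local Notation C := (R[i]).
Variables (A J K : finType) (H : (A -> J -> C) -> A -> J -> C) (Pm : J -> K -> C).

Definition Pop (z : A -> K -> C) : A -> J -> C := fun a j => \sum_k z a k * Pm j k.
Definition Padj (w : A -> J -> C) : A -> K -> C := fun a k => \sum_j w a j * (Pm j k)^*%C.

Lemma H_rep : linear_op R H -> forall Y a j,
  H Y a j = \sum_(p : A * J) Y p.1 p.2 * H (fun b i => ((b, i) == p)%:R) a j.
Proof.
move=> HL Y a j.
have HL' : islin (fun y : A * J -> C => H (fun b i => y (b, i)) a j).
  move=> al be X Z; by rewrite (HL al be (fun b i => X (b, i)) (fun b i => Z (b, i))).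
exact: (lin_rep _ (fun y : A * J -> C => H (fun b i => y (b, i)) a j) (fun p => Y p.1 p.2) HL').
Qed.

Lemma inner_conj {A' B' : finType} (X Y : A' -> B' -> C) : ((inner R X Y)^*)%C = inner R Y X.
Proof.
rewrite /inner rmorph_sum; apply: eq_bigr => a _; rewrite rmorph_sum; apply: eq_bigr => b _.
by rewrite rmorphM /= conjcK mulrC.
Qed.

Lemma inner_adj z w : inner R (Pop z) w = inner R z (Padj w).
Proof.
rewrite /inner; apply: eq_bigr => a _.
under eq_bigr => j _ do rewrite /Pop rmorph_sum mulr_suml.
rewrite exchange_big /=; apply: eq_bigr => k _.
rewrite /Padj mulr_sumr; apply: eq_bigr => j _.
by rewrite rmorphM /= mulrAC -mulrA.
Qed.

Lemma conj_i : ('i : C)^*%C = - 'i.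
Proof. by apply/eqP; rewrite eq_complex /= oppr0 !eqxx. Qed.

Lemma inner_i {A' B' : finType} (w : A' -> B' -> C) :
  inner R (fun a k => - 'i * w a k) w + ((inner R (fun a k => - 'i * w a k) w)^*)%C = 0.
Proof.
have -> : inner R (fun a k => - 'i * w a k) w = 'i * inner R w w.
  rewrite /inner mulr_sumr; apply: eq_bigr => a _; rewrite mulr_sumr; apply: eq_bigr => b _.
  rewrite rmorphM rmorphN /= mulrA; congr (_ * _ * _).
  by apply/eqP; rewrite eq_complex /= opprK oppr0 !eqxx.
rewrite rmorphM /= inner_conj -mulrDl.
have -> : ('i + ((-1)*i)%C : C) = 0 by apply/eqP; rewrite eq_complex /= addr0 subrr !eqxx.
by rewrite mul0r.
Qed.

Lemma energy_cons (t0 t1 : R) (Ch : R -> A -> K -> C) : linear_op R H -> self_adjoint R H -> t0 < t1 ->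
  solves R Ch (fun z => Padj (fun a j => - 'i * H (Pop z) a j)) t0 t1 (Ch t0) ->
  energy R H (Pop (Ch t1)) = energy R H (Pop (Ch t0)).
Proof.
move=> HL HSA Ht [_ [Hc Hd]].
set Gal := fun z => Padj (fun a j => - 'i * H (Pop z) a j).
have Dz : forall a k, Dg t0 t1 (fun s => Ch s a k) (fun s => Gal (Ch s) a k).
  move=> a k; split; first exact: Hc.
  by move=> t Ht'; exact: (Hd t Ht' a k).
have DY : forall a j, Dg t0 t1 (fun s => Pop (Ch s) a j) (fun s => Pop (Gal (Ch s)) a j).
  move=> a j; apply: (Dg_ext _ _ _ _ _ _ _ _ (Dg_sum _ _ _ _ _ _ (fun k => Dg_mul _ _ _ _ _ _ (Dz a k) (Dg_cst _ _ (Pm j k))))).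
    by [].
  by move=> t _; rewrite /Pop; apply: eq_bigr => k _; rewrite mulr0 addr0.
have DHY : forall a j, Dg t0 t1 (fun s => H (Pop (Ch s)) a j) (fun s => H (Pop (Gal (Ch s))) a j).
  move=> a j; apply: (Dg_ext _ _ _ _ _ _ _ _ (Dg_sum _ _ _ _ _ _ (fun p => Dg_mul _ _ _ _ _ _ (DY p.1 p.2) (Dg_cst _ _ (H (fun b i => ((b, i) == p)%:R) a j))))).
    by move=> s; rewrite [RHS](H_rep HL).
  by move=> t _; rewrite [RHS](H_rep HL); apply: eq_bigr => p _; rewrite mulr0 addr0.
have DE : Dg t0 t1 (fun s => energy R H (Pop (Ch s))) (fun _ => 0).
  apply: (Dg_ext _ _ _ _ _ _ _ _ (Dg_sum _ _ _ _ _ _ (fun a => Dg_sum _ _ _ _ _ _ (fun j => Dg_mul _ _ _ _ _ _ (Dg_conj _ _ _ _ (DY a j)) (DHY a j))))).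
    by [].
  move=> t _; set z := Ch t.
  transitivity (inner R (Pop (Gal z)) (H (Pop z)) + inner R (Pop z) (H (Pop (Gal z)))).
    rewrite /inner -big_split; apply: eq_bigr => a _; by rewrite -big_split.
  rewrite -(HSA (Pop z) (Pop (Gal z))) -(inner_conj (Pop (Gal z)) (H (Pop z))) inner_adj.
  have -> : Gal z = (fun a k => - 'i * Padj (H (Pop z)) a k).
    apply: funext => a; apply: funext => k; rewrite /Gal /Padj mulr_sumr.
    by apply: eq_bigr => j _; rewrite mulrA.
  exact: inner_i.
exact: (Dg_const0 _ _ _ Ht DE).
Qed.

End En.

Theorem theorem6p3 (R : realType) (d : nat) (n : nat -> nat) (tau : tree)
    (rk rkh : tree -> nat)
    (H : V R n rk tau -> V R n rk tau)
    (Y0 : TTN R n rk (rk tau) tau)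
    (t0 t1 : R)
    (Y1 : TTN R n rkh (rk tau) tau) (Ch0 : ConnT R rkh (rk tau) tau) :
  is_tree_on d tau ->
  rk tau = 1%N ->
  linear_op R H ->
  self_adjoint R H ->
  ortho_below R n rk (rk tau) tau Y0 ->
  full_tree_rank R n rk (rk tau) tau Y0 ->
  t0 < t1 ->
  Integ R n rk rkh t0 t1 tau Y0 (fun Y a j => - 'i%C * H Y a j) Y1 Ch0 ->
  energy R H (full R n rkh (rk tau) tau Y1) = energy R H (full R n rk (rk tau) tau Y0).
Proof.
move=> Htree Hrk1 HL HSA Hortho Hftr Ht HI.
have HP := @main_ind R n rk rkh t0 t1 tau Y0 _ Y1 Ch0 HI.
clear Htree Hrk1 Hortho.
destruct tau as [l|ts]; first by case: HP.
case: Y1 HP HI => Ch1 kidsh HP HI.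
have [HA [HB [Ch [Hsol HCh]]]] := HP Hftr.
simpl in HCh; subst Ch1.
set Uh := UmH R n (fun s : tree => TTN R n rkh (rkh s) s) (ordT rkh)
            (fun s : tree => full R n rkh (rkh s) s) ts kidsh.
pose Pm := fun (js : Idx n (Node ts)) (k : PL (ordT rkh) ts) =>
  mcS R (Idx n) (ordT rkh) ts Uh (fun y => (y == k)%:R) js.
have EP : forall z : 'I_(rk (Node ts)) -> PL (ordT rkh) ts -> R[i],
    (fun a js => mcS R (Idx n) (ordT rkh) ts Uh (z a) js) = Pop _ _ _ Pm z.
  move=> z; apply: funext => a; apply: funext => js; exact: mc_rep.
have E1 : full R n rkh (rk (Node ts)) (Node ts) (Ch t1, kidsh) = Pop _ _ _ Pm (Ch t1).
  by rewrite -EP.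
have E0 : full R n rk (rk (Node ts)) (Node ts) Y0 = Pop _ _ _ Pm (Ch t0).
  rewrite (proj1 Hsol) -EP; apply: funext => a; apply: funext => js.
  by rewrite -HB.
rewrite E1 E0.
apply: (energy_cons _ _ _ H Pm t0 t1 Ch HL HSA Ht).
have EG : Galerkin R n rk rkh ts kidsh (fun (Y : V R n rk (Node ts)) a j => - 'i%C * H Y a j) =
    (fun z => Padj _ _ _ Pm (fun a j => - 'i%C * H (Pop _ _ _ Pm z) a j)).
  apply: funext => z; apply: funext => a; apply: funext => ks.
  rewrite /Galerkin -/Uh mc_rep /Padj; apply: eq_bigr => js _.
  rewrite (mc_conj_delta ts Uh js ks) -/(Pm js ks); congr (_ * _).
  by rewrite EP.
by rewrite -EG (proj1 Hsol).
Qed.
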